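(* Fix $x_{\rm A}>0$ and let $v_E=\sqrt{2/x_{\rm A}}$. There exists $\delta>0$ such that for every $x_{\rm B}\in\,]x_{\rm A}-\delta,x_{\rm A}[$ (with $x_{\rm B}>0$), the function $T_I^R:\,]-\infty,v_E[\,\to\,]0,\infty[$ is not convex; more precisely ${\rm d}^2T_I^R/{\rm d}v_{\rm A}^2<0$ at $v_{\rm A}=0$.
   Context: Kepler problem on a line normalized as $\ddot x=-1/x^2$ ($x>0$), with motions extended after collision with ${\rm O}$ ($x=0$): the body bounces back with the same energy $H=\dot x^2/2-1/x$. For $0<x_{\rm B}<x_{\rm A}$ and $v_{\rm A}<v_E$, $T_I^R(v_{\rm A})$ is the time elapsed from $t_{\rm A}$ until the first arrival at $x_{\rm B}$ after the first collision with ${\rm O}$, for the solution with $x(t_{\rm A})=x_{\rm A}$, $\dot x(t_{\rm A})=v_{\rm A}$ (the simple indirect rectilinear arc from ${\rm A}$ to ${\rm B}$). *)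

(* Defs.v *)
From Stdlib Require Import Reals Lra.
Open Scope R_scope.

(* Normalized rectilinear Kepler problem  x'' = -1/x^2  (x > 0),
   energy  H = x'^2/2 - 1/x, motions extended after collision with O
   by elastic bounce (same energy).  *)

Definition energy (x v : R) : R := v ^ 2 / 2 - 1 / x.

Definition v_escape (x : R) : R := sqrt (2 / x).

(* t_out H x : time needed by a solution of energy H to travel outward
   from the collision O (x = 0) to the distance x > 0 (requires
   H + 1/x >= 0, i.e. x below the apocenter when H < 0).  This is the
   classical explicit solution of the radial Kepler problem:
   - H < 0, a = -1/(2H):  x = a (1 - cos E),  t = a^(3/2) (E - sin E), E in [0,pi];
   - H = 0:               t = (sqrt 2 / 3) x^(3/2);
   - H > 0, a = 1/(2H):   x = a (cosh F - 1), t = a^(3/2) (sinh F - F), F >= 0.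
   Equivalently t_out H x = \int_0^x dr / sqrt (2 (H + 1/r)). *)
Definition t_out (H x : R) : R :=
  match Rlt_dec H 0 with
  | left _ =>
      let a := - / (2 * H) in
      let E := acos (1 - x / a) in
      a * sqrt a * (E - sin E)
  | right _ =>
      match Req_EM_T H 0 with
      | left _ => sqrt 2 / 3 * (x * sqrt x)
      | right _ =>
          let a := / (2 * H) in
          let c := 1 + x / a in
          let F := ln (c + sqrt (c ^ 2 - 1)) in
          a * sqrt a * (sinh F - F)
      end
  end.

(* T_I^R(vA): time elapsed from t_A until the first arrival at x_B after
   the first collision with O, for the solution with x(t_A) = xA,
   x'(t_A) = vA, where 0 < xB < xA and vA < v_escape xA.
   - vA <= 0: the body falls directly to O (time t_out H xA), bounces and
     reaches xB (time t_out H xB);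
   - vA > 0 (so H < 0): the body first climbs to the apocenter
     x_max = -1/H (time t_out H x_max - t_out H xA), falls to O
     (time t_out H x_max), bounces and reaches xB (time t_out H xB). *)
Definition T_IR (xA xB vA : R) : R :=
  let H := energy xA vA in
  match Rle_dec vA 0 with
  | left _ => t_out H xA + t_out H xB
  | right _ => 2 * t_out H (- / H) - t_out H xA + t_out H xB
  end.

(* Main.v *)
Require Import Defs.
From Stdlib Require Import Reals Lra.
From Coquelicot Require Import Coquelicot.
Open Scope R_scope.

Lemma acos_m1 : acos (-1) = PI.
Proof. unfold acos. destruct (Rle_dec (-1) (-1)); [reflexivity | lra]. Qed.

Lemma acos_def y : -1 < y < 1 -> acos y = PI/2 - atan (y / sqrt (1 - y²)).
Proof. intros H. unfold acos. destruct (Rle_dec y (-1)); [lra|]. destruct (Rle_dec 1 y); [lra|]. reflexivity. Qed.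

Section S.
Variables xA xB : R.
Hypothesis hxA : 0 < xA.
Hypothesis hxB : 0 < xB.
Definition sg u := 2/xA - u.
Definition ct u := /sg u * /sqrt(sg u).
Definition yB u := 1 - xB * sg u.
Definition pB u := sqrt(1 - yB u * yB u).
Definition KB u := PI + PI/2 - atan(yB u / pB u) - pB u.
Definition e u := ct u * KB u.
Definition dct u := /(sg u * sg u) * /sqrt(sg u) + /sg u * (/(2*sqrt(sg u)) / (sqrt(sg u)*sqrt(sg u))).
Definition dKB u := - (xB * (xB * sg u)) / pB u.
Definition de u := dct u * KB u + ct u * dKB u.

Lemma sg_pos u : u < 2/xA -> 0 < 2/xA + - u /\ 2 + - u * xA <> 0 /\ 0 < sqrt (2/xA + -u).
Proof.
intros Hu. assert (0 < 2/xA + -u) by lra. split; auto. split.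
- assert (u * xA < 2/xA * xA) by (apply Rmult_lt_compat_r; lra).
  replace (2/xA*xA) with 2 in H0 by (field; lra). lra.
- apply sqrt_lt_R0; lra.
Qed.

Lemma d_ct u : u < 2/xA -> is_derive ct u (dct u).
Proof.
intros Hu. destruct (sg_pos u Hu) as (H1 & H2 & H3).
unfold ct, dct, sg in *. auto_derive; unfold Rminus in *.
- repeat split; lra.
- field. repeat split; lra.
Qed.

Lemma d_e u : u < 2/xA -> -1 < yB u < 1 -> is_derive e u (de u).
Proof.
intros Hu Hy. destruct (sg_pos u Hu) as (H1 & H2 & H3).
assert (Hp0 : 0 < 1 - yB u * yB u) by nra.
assert (Hp : 0 < pB u) by (apply sqrt_lt_R0; lra).
unfold e, de, dct, ct, KB, dKB, pB, yB, sg in *. auto_derive; unfold Rminus in *.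
- repeat split; lra.
- set (q := sqrt (2 / xA + - u)) in *. set (p := sqrt (1 + - ((1 + - (xB * (2 / xA + - u))) * (1 + - (xB * (2 / xA + - u)))))) in *. set (t := atan _) in *. field. repeat split; try lra. apply Rgt_not_eq. apply Rplus_lt_le_0_compat; [apply Rmult_lt_0_compat; apply Rmult_lt_0_compat; lra | apply Rle_0_sqr].
Qed.
Definition w v := v * xA * sqrt(sg (v*v)).
Definition m v := 1 - xA*v*v.
Definition ODD v := atan(w v / m v) + w v.
Definition dw v := xA * sqrt(sg(v*v)) + v*xA*( (-(2*v)) / (2 * sqrt(sg (v*v)))).
Definition dm v := -(2*xA*v).
Definition dz v := (dw v * m v - w v * dm v)/(m v * m v).
Definition D v := dz v / (1 + (w v / m v) * (w v / m v)) + dw v.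
Definition k v := ct (v*v) * D v.
Definition g v := 2*(dct(v*v)*ODD v + de(v*v)).

Lemma d_ODD v : v*v < 2/xA -> m v <> 0 -> is_derive ODD v (D v).
Proof.
intros Hu Hm. destruct (sg_pos (v*v) Hu) as (H1 & H2 & H3).
unfold ODD, D, dz, dm, dw, w, m, sg in *. auto_derive; unfold Rminus in *.
- repeat split; lra.
- set (q := sqrt (2 / xA + - (v*v))) in *. field. repeat split; try lra. apply Rgt_not_eq. apply Rplus_lt_le_0_compat; [apply Rsqr_pos_lt; lra | apply Rle_0_sqr].
Qed.

Lemma d_k : is_derive k 0 0.
Proof.
assert (Hu : 0 * 0 < 2/xA). { rewrite Rmult_0_l. apply Rdiv_lt_0_compat; lra. }
destruct (sg_pos (0*0) Hu) as (H1 & H2 & H3).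
unfold k, ct, D, dz, dm, dw, w, m, sg in *. auto_derive; unfold Rminus in *.
- repeat split; lra.
- set (q := sqrt (2 / xA + - (0*0))) in *. field. repeat split; lra.
Qed.

Definition G v := ct (v*v) * ODD v + e (v*v).
Definition d1 v := v * g v + k v.

Lemma ex_g : -1 < yB 0 < 1 -> ex_derive g 0.
Proof.
intros Hy.
assert (Hu : 0 * 0 < 2/xA). { rewrite Rmult_0_l. apply Rdiv_lt_0_compat; lra. }
destruct (sg_pos (0*0) Hu) as (H1 & H2 & H3).
unfold yB, sg in Hy. unfold Rminus in Hy.
assert (Hp0 : 0 < 1 + - ((1 + - (xB * (2 / xA + - 0))) * (1 + - (xB * (2 / xA + - 0))))) by nra.
assert (Hp : 0 < sqrt (1 + - ((1 + - (xB * (2 / xA + - 0))) * (1 + - (xB * (2 / xA + - 0)))))) by (apply sqrt_lt_R0; lra).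
rewrite Rmult_0_l in H1, H2, H3.
unfold g, ODD, de, dct, ct, KB, dKB, pB, yB, w, m, sg. auto_derive; unfold Rminus in *.
rewrite !Rmult_0_l.
repeat split; try lra; apply Rgt_not_eq; apply Rmult_lt_0_compat; lra.
Qed.

Lemma d_G v : v*v < 2/xA -> m v <> 0 -> -1 < yB (v*v) < 1 -> is_derive G v (d1 v).
Proof.
intros Hu Hm Hy.
unfold G. auto_derive.
- repeat split; eexists; [apply d_ct | apply d_ODD | apply d_e]; auto.
- replace (Derive (fun x => ct x) (v*v)) with (dct (v*v)) by (symmetry; apply is_derive_unique; apply d_ct; auto).
  replace (Derive (fun x => ODD x) v) with (D v) by (symmetry; apply is_derive_unique; apply d_ODD; auto).
  replace (Derive (fun x => e x) (v*v)) with (de (v*v)) by (symmetry; apply is_derive_unique; apply d_e; auto).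
  unfold d1, g, k. ring.
Qed.

Lemma d_d1 : -1 < yB 0 < 1 -> is_derive d1 0 (g 0).
Proof.
intros Hy. unfold d1. auto_derive.
- split; [apply ex_g; auto | split; [eexists; apply d_k | auto]].
- replace (Derive (fun x => k x) 0) with 0 by (symmetry; apply is_derive_unique; apply d_k). ring.
Qed.

Lemma t_out_eq v x : v*v*xA < 2 -> t_out (energy xA v) x = ct (v*v) * (acos (1 - x * sg (v*v)) - sin (acos (1 - x * sg (v*v)))).
Proof.
intros Hv. assert (Hs : 0 < sg (v*v)).
{ unfold sg. assert (v*v < 2/xA); [|lra]. apply (Rmult_lt_reg_r xA); auto. replace (2/xA*xA) with 2 by (field; lra). lra. }
unfold t_out. destruct (Rlt_dec (energy xA v) 0) as [Hn|Hn].
2: { exfalso. apply Hn. unfold energy. unfold sg in Hs. replace (v^2) with (v*v) by ring. lra. }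
cbv zeta.
replace (- / (2 * energy xA v)) with (/ sg (v*v)).
2: { unfold energy, sg in *. replace (v^2) with (v*v) by ring. field. split; lra. }
rewrite sqrt_inv. replace (x / / sg (v*v)) with (x * sg (v*v)) by (field; lra). reflexivity.
Qed.

Lemma XA_eq v : v*v*xA < 1 -> acos (1 - xA * sg (v*v)) - sin (acos (1 - xA * sg (v*v))) = PI - atan (Rabs (w v) / m v) - Rabs (w v).
Proof.
intros Hv. assert (Hs : 0 < sg (v*v)).
{ unfold sg. assert (v*v < 2/xA); [|lra]. apply (Rmult_lt_reg_r xA); auto. replace (2/xA*xA) with 2 by (field; lra). lra. }
assert (Hm : 0 < m v) by (unfold m; lra).
assert (Hm1 : m v <= 1) by (unfold m; nra).
replace (1 - xA * sg (v*v)) with (- m v) by (unfold m, sg; field; lra).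
rewrite acos_opp, sin_PI_x, sin_acos by lra. rewrite acos_atan by lra.
replace (sqrt (1 - (m v)²)) with (Rabs (w v)). ring.
rewrite <- sqrt_Rsqr_abs. f_equal. unfold Rsqr, w.
replace (v * xA * sqrt (sg (v * v)) * (v * xA * sqrt (sg (v * v)))) with (v*xA*(v*xA)*(sqrt (sg (v * v)) * sqrt (sg (v * v)))) by ring.
rewrite sqrt_sqrt by lra. unfold m, sg. field. lra.
Qed.

Lemma XB_eq u : -1 < yB u < 1 -> acos (1 - xB * sg u) - sin (acos (1 - xB * sg u)) = KB u - PI.
Proof.
intros Hy. fold (yB u). rewrite sin_acos by lra. rewrite acos_def by lra. unfold KB, pB, Rsqr. ring.
Qed.

Lemma T_eq v : v*v*xA < 1 -> -1 < yB (v*v) < 1 -> T_IR xA xB v = G v.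
Proof.
intros Hv Hy. unfold T_IR. cbv zeta.
rewrite !t_out_eq by lra. rewrite XA_eq, XB_eq by lra.
assert (Hs : 0 < sg (v*v)).
{ unfold sg. assert (v*v < 2/xA); [|lra]. apply (Rmult_lt_reg_r xA); auto. replace (2/xA*xA) with 2 by (field; lra). lra. }
unfold G, ODD, e.
destruct (Rle_dec v 0) as [Hle|Hgt].
- assert (Hw : w v <= 0).
  { unfold w. assert (0 <= xA * sqrt (sg (v*v))) by (apply Rmult_le_pos; [lra| apply sqrt_pos]). nra. }
  rewrite Rabs_left1 by lra. unfold Rdiv. rewrite Ropp_mult_distr_l_reverse, atan_opp. ring.
- assert (Hw : 0 <= w v).
  { unfold w. assert (0 <= xA * sqrt (sg (v*v))) by (apply Rmult_le_pos; [lra| apply sqrt_pos]). nra. }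
  rewrite Rabs_pos_eq by lra.
  replace (1 - - / energy xA v * sg (v*v)) with (-1).
  2: { unfold energy, sg in *. replace (v^2) with (v*v) by ring. field. split; [|lra].
       intro H0. assert (v*v*xA = 2) by (apply (Rmult_eq_reg_r (/xA)); [|apply Rinv_neq_0_compat; lra]; field_simplify; lra). lra. }
  rewrite acos_m1, sin_PI. ring.
Qed.

Lemma g0_neg : xA - xA/400 < xB < xA -> g 0 < 0.
Proof.
intros [HB1 HB2].
assert (HO : ODD 0 = 0) by (unfold ODD, w; rewrite !Rmult_0_l, Rdiv_0_l, atan_0; ring).
unfold g. rewrite HO. replace (0*0) with 0 by ring.
cut (de 0 < 0). { intros; lra. }
set (r := xB / xA).
assert (Hr1 : r < 1). { unfold r. apply (Rmult_lt_reg_r xA); auto. replace (xB/xA*xA) with xB by (field; lra). lra. }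
assert (Hr2 : 399/400 < r). { unfold r. apply (Rmult_lt_reg_r xA); auto. replace (xB/xA*xA) with xB by (field; lra). lra. }
unfold de, dct, ct, dKB, KB, pB, yB, sg.
replace (2/xA - 0) with (2/xA) by ring.
assert (HxBs : xB * (2/xA) = 2 * r) by (unfold r; field; lra).
rewrite HxBs.
assert (Hs : 0 < 2/xA) by (apply Rdiv_lt_0_compat; lra).
set (s := 2/xA) in *.
assert (Hq : 0 < sqrt s) by (apply sqrt_lt_R0; lra).
assert (Hqq : sqrt s * sqrt s = s) by (apply sqrt_sqrt; lra).
set (q := sqrt s) in *.
assert (Hp0 : 0 < 1 - (1 - 2*r)*(1 - 2*r)) by nra.
assert (Hp : 0 < sqrt (1 - (1 - 2*r)*(1 - 2*r))) by (apply sqrt_lt_R0; lra).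
assert (Hpp : sqrt (1 - (1 - 2*r)*(1 - 2*r)) * sqrt (1 - (1 - 2*r)*(1 - 2*r)) = 1 - (1 - 2*r)*(1 - 2*r)) by (apply sqrt_sqrt; lra).
set (p := sqrt (1 - (1 - 2*r)*(1 - 2*r))) in *.
assert (Hat := atan_bound ((1 - 2*r)/p)).
set (at_ := atan ((1 - 2*r)/p)) in *.
assert (HPI := PI_4). assert (HPI0 := PI_RGT_0).
set (K := PI + PI/2 - at_ - p).
assert (HK : K < 8) by (unfold K; lra).
assert (Hp1 : p < 1/10) by nra.
assert (Hxs : xB * (2 * r) * s = 4 * (r*r)).
{ replace (xB * (2*r) * s) with ((xB*s)*(2*r)) by ring. rewrite HxBs. ring. }
replace ((/ (s * s) * / q + / s * (/ (2 * q) / (q * q))) * K + / s * / q * (- (xB * (2 * r)) / p))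
  with (/(s*s*q) * ((3/2)*K - xB * (2 * r) * s / p)).
2: { rewrite <- Hqq. field. repeat split; lra. }
rewrite Hxs.
assert (A1 : (3/2)*K*p < 4*(r*r)) by nra.
assert (A2 : (3/2)*K < 4*(r*r)/p).
{ apply (Rmult_lt_reg_r p); [lra|]. replace (4*(r*r)/p*p) with (4*(r*r)) by (field; lra). lra. }
assert (A3 : 0 < /(s*s*q)).
{ apply Rinv_0_lt_compat. apply Rmult_lt_0_compat; [apply Rmult_lt_0_compat|]; lra. }
nra.
Qed.
End S.

Lemma tangent (f : R -> R) (c p z l : R) :
 (forall v1 v2 s, v1 < c -> v2 < c -> 0 <= s <= 1 -> f (s*v1 + (1-s)*v2) <= s*f v1 + (1-s)*f v2) ->
 p < c -> z < c -> derivable_pt_lim f p l -> f p + l*(z-p) <= f z.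
Proof.
intros Hc Hp Hz Hd. destruct (Rle_lt_dec (f p + l*(z-p)) (f z)) as [|Hlt]; [auto|exfalso].
set (gap := f p + l*(z-p) - f z).
assert (Hg : 0 < gap) by (unfold gap; lra).
assert (Hzp : z - p <> 0). { intro E. assert (z = p) by lra. subst z. unfold gap in Hg. lra. }
assert (Hdz : 0 < Rabs (z - p)) by (apply Rabs_pos_lt; auto).
set (dz := Rabs (z - p)) in *.
destruct (Hd (gap/dz)) as [dl Hdl]. { apply Rdiv_lt_0_compat; lra. }
assert (Hdl0 := cond_pos dl).
set (t := Rmin 1 (dl/(2*dz))).
assert (Ht0 : 0 < t). { apply Rmin_glb_lt; [lra|]. apply Rdiv_lt_0_compat; lra. }
assert (Ht1 : t <= 1) by apply Rmin_l.
assert (Ht2 : t <= dl/(2*dz)) by apply Rmin_r.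
set (h := t * (z - p)).
assert (Hh0 : h <> 0). { unfold h. apply Rmult_integral_contrapositive_currified; lra. }
assert (Hah : Rabs h = t * dz). { unfold h, dz. rewrite Rabs_mult, (Rabs_pos_eq t) by lra. reflexivity. }
assert (Hhd : Rabs h < dl).
{ rewrite Hah. assert (t * dz <= dl/(2*dz) * dz) by (apply Rmult_le_compat_r; lra).
  replace (dl/(2*dz)*dz) with (dl/2) in H by (field; lra). lra. }
specialize (Hdl h Hh0 Hhd).
assert (Hconv := Hc z p t Hz Hp (conj (Rlt_le _ _ Ht0) Ht1)).
replace (t * z + (1 - t) * p) with (p + h) in Hconv by (unfold h; ring).
assert (E : f (p+h) - f p - l*h = ((f (p+h) - f p)/h - l)*h) by (field; auto).
assert (E2 : Rabs (f (p+h) - f p - l*h) < gap * t).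
{ rewrite E, Rabs_mult.
  assert (Rabs ((f (p + h) - f p) / h - l) * Rabs h < gap/dz * Rabs h).
  { apply Rmult_lt_compat_r; [apply Rabs_pos_lt; auto | auto]. }
  rewrite Hah in H |- *. replace (gap/dz*(t*dz)) with (gap*t) in H by (field; lra). lra. }
apply Rabs_def2 in E2. destruct E2 as [_ E2].
assert (f (p+h) - f p - l*h <= - (gap * t)).
{ unfold gap. replace (l*h) with (l*t*(z-p)) by (unfold h; ring). lra. }
nra.
Qed.

Theorem proposition7 (xA : R) (hxA : 0 < xA) :
  exists delta : R, 0 < delta /\
    forall xB : R, 0 < xB -> xA - delta < xB < xA ->
      (* T_I^R is not convex on ]-oo, v_E[ *)
      ~ (forall v1 v2 s : R, v1 < v_escape xA -> v2 < v_escape xA ->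
           0 <= s <= 1 ->
           T_IR xA xB (s * v1 + (1 - s) * v2)
             <= s * T_IR xA xB v1 + (1 - s) * T_IR xA xB v2) /\
      (* more precisely, d^2 T_I^R / d vA^2 < 0 at vA = 0 *)
      (exists (d1 : R -> R) (eps : R), 0 < eps /\
         (forall v : R, Rabs v < eps -> derivable_pt_lim (T_IR xA xB) v (d1 v)) /\
         exists d2 : R, derivable_pt_lim d1 0 d2 /\ d2 < 0).
Proof.
exists (xA/400). split; [lra|]. intros xB hxB [HB1 HB2].
set (eps := /(2*(xA+1))).
assert (He0 : 0 < eps) by (apply Rinv_0_lt_compat; lra).
assert (He1 : eps < 1/2).
{ unfold eps. apply (Rmult_lt_reg_r (2*(xA+1))); [lra|]. rewrite Rinv_l by lra. lra. }
assert (He2 : eps * xA < 1/2).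
{ unfold eps. apply (Rmult_lt_reg_r (2*(xA+1))); [lra|].
  replace (/ (2 * (xA + 1)) * xA * (2 * (xA + 1))) with xA by (field; lra). lra. }
assert (Hr : xB * (2/xA) < 2).
{ replace (xB * (2/xA)) with (2 * (xB/xA)) by (field; lra).
  assert (xB/xA < 1); [|lra]. apply (Rmult_lt_reg_r xA); auto. replace (xB/xA*xA) with xB by (field; lra). lra. }
assert (Reg : forall v, Rabs v < eps -> v*v*xA < 1/4 /\ m xA v <> 0 /\ -1 < yB xA xB (v*v) < 1 /\ v*v < 2/xA).
{ intros v Hv. apply Rabs_def2 in Hv. destruct Hv as [Hv1 Hv2].
  assert (V1 : v*v < eps*eps) by nra.
  assert (V2 : v*v*xA < 1/4) by nra.
  assert (V3 : v*v < 2/xA).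
  { apply (Rmult_lt_reg_r xA); auto. replace (2/xA*xA) with 2 by (field; lra). lra. }
  split; [auto|]. split; [unfold m; lra|]. split; [|auto].
  unfold yB, sg. assert (0 <= xB * (v*v)) by (apply Rmult_le_pos; nra).
  assert (0 < xB * (2/xA - v*v)) by (apply Rmult_lt_0_compat; lra). nra. }
assert (HD : forall v, Rabs v < eps -> derivable_pt_lim (T_IR xA xB) v (d1 xA xB v)).
{ intros v Hv. apply is_derive_Reals.
  apply is_derive_ext_loc with (G xA xB).
  - assert (Hr0 : 0 < eps - Rabs v) by lra.
    exists (mkposreal _ Hr0). intros y Hy. simpl in Hy.
    unfold ball in Hy; simpl in Hy; unfold AbsRing_ball, abs, minus, plus, opp in Hy; simpl in Hy.
    assert (Hy2 : Rabs y < eps).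
    { replace y with ((y + - v) + v) by ring. eapply Rle_lt_trans; [apply Rabs_triang|]. lra. }
    destruct (Reg y Hy2) as (R1 & R2 & R3 & R4).
    symmetry. apply T_eq; auto. lra.
  - destruct (Reg v Hv) as (R1 & R2 & R3 & R4). apply d_G; auto. }
assert (Hy0 : -1 < yB xA xB 0 < 1).
{ replace 0 with (0*0) by ring. destruct (Reg 0) as (_ & _ & R3 & _); auto. rewrite Rabs_R0; auto. }
assert (Hd2 : derivable_pt_lim (d1 xA xB) 0 (g xA xB 0)).
{ apply is_derive_Reals. apply d_d1; auto. }
assert (Hg0 : g xA xB 0 < 0) by (apply g0_neg; auto; lra).
split.
2: { exists (d1 xA xB), eps. split; [auto|]. split; [auto|]. exists (g xA xB 0). auto. }
intros Hconv.
assert (Hesc : forall v, Rabs v < eps -> v < v_escape xA).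
{ intros v Hv. destruct (Reg v Hv) as (_ & _ & _ & R4). unfold v_escape.
  destruct (Rle_lt_dec v 0).
  - assert (0 < sqrt (2/xA)) by (apply sqrt_lt_R0; apply Rdiv_lt_0_compat; lra). lra.
  - rewrite <- (sqrt_square v) by lra. apply sqrt_lt_1_alt. split; nra. }
assert (Hmono : forall h, 0 < h < eps -> d1 xA xB 0 <= d1 xA xB h).
{ intros h Hh.
  assert (Ah : Rabs h < eps) by (rewrite Rabs_pos_eq; lra).
  assert (A0 : Rabs 0 < eps) by (rewrite Rabs_R0; lra).
  assert (T1 := tangent _ _ _ _ _ Hconv (Hesc 0 A0) (Hesc h Ah) (HD 0 A0)).
  assert (T2 := tangent _ _ _ _ _ Hconv (Hesc h Ah) (Hesc 0 A0) (HD h Ah)).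
  nra. }
destruct (Hd2 (- g xA xB 0 / 2)) as [dl Hdl]. { lra. }
assert (Hdl0 := cond_pos dl).
set (h := Rmin eps dl / 2).
assert (Hm0 : 0 < Rmin eps dl) by (apply Rmin_glb_lt; lra).
assert (Hm1 : Rmin eps dl <= eps) by apply Rmin_l.
assert (Hm2 : Rmin eps dl <= dl) by apply Rmin_r.
assert (Hh : 0 < h < eps) by (unfold h; lra).
assert (Hhd : Rabs h < dl) by (rewrite Rabs_pos_eq; unfold h; lra).
specialize (Hdl h (Rgt_not_eq _ _ (proj1 Hh)) Hhd).
rewrite Rplus_0_l in Hdl.
apply Rabs_def2 in Hdl. destruct Hdl as [Hdl _].
assert (0 <= (d1 xA xB h - d1 xA xB 0) / h).
{ apply Rdiv_le_0_compat; [| lra]. assert (X := Hmono h Hh). lra. }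
lra.
Qed.
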